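(* Let $H$ be the $3$-uniform hypergraph on vertex set $[6]$ with edges $\{1,2,3\},\{3,4,5\},\{1,5,6\}$. Then the $h$-vector of the coloring complex $\Delta_H$ is $(1,33,39,-1)$. Consequently there exist uniform hypergraphs $H$ such that $h(\Delta_H)$ has a negative entry and $\Delta_H$ is not partitionable.
   Context: The coloring complex $\Delta_H$ of a hypergraph $H=([n],E)$ is the abstract simplicial complex whose vertices are the nonempty proper subsets of $[n]$ and whose faces are the chains $\emptyset\neq A_1\subsetneq\cdots\subsetneq A_l\neq[n]$ ($l\ge0$) such that, with $A_0=\emptyset$, $A_{l+1}=[n]$, some difference $A_i\setminus A_{i-1}$ ($1\le i\le l+1$) contains an edge of $H$. For a $(d-1)$-dimensional complex with $f_i$ faces of dimension $i$ ($f_{-1}=1$), the $h$-vector $(h_0,\dots,h_d)$ is defined by $\sum_i h_i t^{d-i}=\sum_i f_{i-1}(t-1)^{d-i}$. A simplicial complex $\Delta$ with facets $F_1,\dots,F_m$ is partitionable if $\Delta=\bigsqcup_{j=1}^m[G_j,F_j]$ (disjoint union) for some faces $G_j\subseteq F_j$, where $[G,F]=\{K: G\subseteq K\subseteq F\}$. *)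

(* Defs.v *)
From HB Require Import structures.
From mathcomp Require Import all_boot all_order all_algebra.
Set Implicit Arguments. Unset Strict Implicit. Unset Printing Implicit Defensive.
Import Order.TTheory GRing.Theory Num.Theory.

(* Hypergraph on vertex set [n] = 'I_n (vertex i+1 of the paper is i here),
   given by its set of edges. *)
Definition uniform (n k : nat) (E : {set {set 'I_n}}) : bool :=
  [forall e in E, #|e| == k].

(* Faces of the coloring complex: a face is a set F of vertices, vertices being
   nonempty proper subsets of [n]; F must be a chain A_1 ⊊ ... ⊊ A_l, and with
   A_0 = ∅, A_(l+1) = [n], some consecutive difference A_i \ A_(i-1) contains an
   edge.  Consecutive pairs (B, A) are the pairs B ⊊ A in F ∪ {∅, [n]}
   (B in F ∪ {∅}, A in F ∪ {[n]}) with no C ∈ F strictly between them. *)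
Definition ccface (n : nat) (E : {set {set 'I_n}}) (F : {set {set 'I_n}}) : bool :=
  [&& [forall A in F, (A != set0) && (A != [set: 'I_n])],
      [forall A in F, forall B in F, (A \subset B) || (B \subset A)] &
      [exists e in E, exists A in [set: 'I_n] |: F, exists B in set0 |: F,
         [&& B \proper A, e \subset A :\: B &
             [forall C in F, ~~ ((B \proper C) && (C \proper A))]]]].

Section Complex.
Variable V : finType.
Variable face : {set V} -> bool.

(* d = dim + 1 = maximal face size *)
Definition cdim1 : nat := \max_(F : {set V} | face F) #|F|.

(* number of faces of size i, i.e. f_(i-1) *)
Definition fnum (i : nat) : nat := #|[set F : {set V} | face F & #|F| == i]|.

(* sum_i h_i t^(d-i) = sum_(i=0)^d f_(i-1) (t-1)^(d-i) *)
Definition hpoly : {poly int} :=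
  \sum_(i < cdim1.+1) (((fnum i)%:Z)%:P * ('X - 1) ^+ (cdim1 - i))%R.

Definition hvector : seq int := [seq (hpoly`_(cdim1 - k))%R | k <- iota 0 cdim1.+1].

Definition facet (F : {set V}) : Prop :=
  face F /\ forall K : {set V}, face K -> F \subset K -> K = F.

(* Δ = disjoint union over its facets F of intervals [G F, F]. *)
Definition partitionable : Prop :=
  exists G : {set V} -> {set V},
    (forall F, facet F -> G F \subset F) /\
    (forall F K : {set V}, facet F -> G F \subset K -> K \subset F -> face K) /\
    (forall K, face K ->
       exists F, (facet F /\ G F \subset K /\ K \subset F) /\
         forall F', facet F' /\ G F' \subset K /\ K \subset F' -> F' = F).
End Complex.

Definition coloring_complex (n : nat) (E : {set {set 'I_n}}) := ccface E.

Definition H6 : {set {set 'I_6}} :=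
  [set [set (inord 0 : 'I_6); inord 1; inord 2];
       [set (inord 2 : 'I_6); inord 3; inord 4];
       [set (inord 0 : 'I_6); inord 4; inord 5]].

(* Main.v *)
Require Import Defs.
From HB Require Import structures.
From mathcomp Require Import all_boot all_order all_algebra.
From mathcomp Require Import zify ring.
Set Implicit Arguments. Unset Strict Implicit. Unset Printing Implicit Defensive.
Import Order.TTheory GRing.Theory Num.Theory.

Definition codes : seq (seq bool) := [:: [:: false; false; false; false; false; false]; [:: true; false; false; false; false; false]; [:: false; true; false; false; false; false]; [:: true; true; false; false; false; false]; [:: false; false; true; false; false; false]; [:: true; false; true; false; false; false]; [:: false; true; true; false; false; false]; [:: true; true; true; false; false; false]; [:: false; false; false; true; false; false]; [:: true; false; false; true; false; false]; [:: false; true; false; true; false; false]; [:: true; true; false; true; false; false]; [:: false; false; true; true; false; false]; [:: true; false; true; true; false; false]; [:: false; true; true; true; false; false]; [:: true; true; true; true; false; false]; [:: false; false; false; false; true; false]; [:: true; false; false; false; true; false]; [:: false; true; false; false; true; false]; [:: true; true; false; false; true; false]; [:: false; false; true; false; true; false]; [:: true; false; true; false; true; false]; [:: false; true; true; false; true; false]; [:: true; true; true; false; true; false]; [:: false; false; false; true; true; false]; [:: true; false; false; true; true; false]; [:: false; true; false; true; true; false]; [:: true; true; false; true; true; false]; [:: false; false; true; true; true; false]; [:: true; false; true; true; true; false]; [:: false; true; true; true; true; false]; [:: true; true; true; true; true; false]; [:: false; false; false; false; false; true]; [:: true; false; false; false; false; true]; [:: false; true; false; false; false; true]; [:: true; true;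 false; false; false; true]; [:: false; false; true; false; false; true]; [:: true; false; true; false; false; true]; [:: false; true; true; false; false; true]; [:: true; true; true; false; false; true]; [:: false; false; false; true; false; true]; [:: true; false; false; true; false; true]; [:: false; true; false; true; false; true]; [:: true; true; false; true; false; true]; [:: false; false; true; true; false; true]; [:: true; false; true; true; false; true]; [:: false; true; true; true; false; true]; [:: true; true; true; true; false; true]; [:: false; false; false; false; true; true]; [:: true; false; false; false; true; true]; [:: false; true; false; false; true; true]; [:: true; true; false; false; true; true]; [:: false; false; true; false; true; true]; [:: true; false; true; false; true; true]; [:: false; true; true; false; true; true]; [:: true; true; true; false; true; true]; [:: false; false; false; true; true; true]; [:: true; false; false; true; true; true]; [:: false; true; false; true; true; true]; [:: true; true; false; true; true; true]; [:: false; false; true; true; true; true]; [:: true; false; true; true; true; true]; [:: false; true; true; true; true; true]; [:: true; true; true; true; true; true]].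

Definition bt (x : seq bool) (i : nat) : bool := nth false x i.
Definition subm a b := all (fun i => bt a i ==> bt b i) (iota 0 6).
Definition properm a b := subm a b && ~~ subm b a.
Definition subdm e a b := all (fun i => bt e i ==> (bt a i && ~~ bt b i)) (iota 0 6).
Definition nonemptym a := has (bt a) (iota 0 6).
Definition fullm a := all (bt a) (iota 0 6).
Definition z0 : seq bool := nseq 6 false.
Definition z1 : seq bool := nseq 6 true.
Definition ccm (Es s : seq (seq bool)) : bool :=
  [&& all (fun a => nonemptym a && ~~ fullm a) s,
      all (fun a => all (fun b => subm a b || subm b a) s) s &
      has (fun e => has (fun A => has (fun B =>
         [&& properm B A, subdm e A B & all (fun C => ~~ (properm B C && properm C A)) s])
         (z0 :: s)) (z1 :: s)) Es].
Definition Es : seq (seq bool) := [:: [:: true; true; true; false; false; false];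
  [:: false; false; true; true; true; false]; [:: true; false; false; false; true; true]].
Definition lsum (F : seq bool -> nat) := sumn (map F codes).

Lemma c1 : lsum (fun a => ccm Es [:: a]) = 36.
Proof. vm_compute. reflexivity. Qed.
Lemma c2 : lsum (fun a => lsum (fun b => if properm a b then ccm Es [:: a; b] else false)) = 108.
Proof. vm_compute. reflexivity. Qed.
Lemma c3 : lsum (fun a => lsum (fun b => lsum (fun c => if properm a b then if properm b c then ccm Es [:: a; b; c] else false else false))) = 72.
Proof. vm_compute. reflexivity. Qed.
Lemma c4 : all (fun a => all (fun b => if properm a b then if ccm Es [:: a; b] then
   has (fun c => if c != a then if c != b then ccm Es [:: a; b; c] else false else false) codes else true else true) codes) codes.
Proof. vm_compute. reflexivity. Qed.
Lemma c5 : uniq codes && all (fun x => size x == 6) codes.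
Proof. vm_compute. reflexivity. Qed.

Definition setL (x : seq bool) : {set 'I_6} := [set i : 'I_6 | bt x i].

Lemma allI6 (p : nat -> bool) : [forall i : 'I_6, p i] = all p (iota 0 6).
Proof.
apply/forallP/allP => H i.
- by rewrite mem_iota => /andP[_ hi]; exact: (H (Ordinal hi)).
- by apply: H; rewrite mem_iota ltn_ord.
Qed.

Lemma hasI6 (p : nat -> bool) : [exists i : 'I_6, p i] = has p (iota 0 6).
Proof.
apply/existsP/hasP => [[i Hi]|[i]].
- by exists (val i) => //; rewrite mem_iota ltn_ord.
- by rewrite mem_iota => /andP[_ hi] Hp; exists (Ordinal hi).
Qed.

Lemma subL x y : (setL x \subset setL y) = subm x y.
Proof.
rewrite /subm -allI6; apply/subsetP/forallP => H i.
- by apply/implyP => hx; have := H i; rewrite !inE; apply.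
- by rewrite !inE => hx; have /implyP := H i; apply.
Qed.

Lemma properL x y : (setL x \proper setL y) = properm x y.
Proof. by rewrite properE !subL. Qed.

Lemma subdL e x y : (setL e \subset setL x :\: setL y) = subdm e x y.
Proof.
rewrite /subdm -allI6; apply/subsetP/forallP => H i.
- by apply/implyP => hx; have := H i; rewrite !inE andbC; apply.
- by rewrite !inE andbC => hx; have /implyP := H i; apply.
Qed.

Lemma neL x : (setL x != set0) = nonemptym x.
Proof.
rewrite /nonemptym -hasI6; apply/set0Pn/existsP => -[i Hi]; exists i; by rewrite inE in Hi *.
Qed.

Lemma nfL x : (setL x != setT) = ~~ fullm x.
Proof.
rewrite /fullm -allI6; congr negb; apply/eqP/forallP => [H i|H].
- by have := in_setT i; rewrite -H inE.
- by apply/setP => i; rewrite !inE H.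
Qed.

Lemma setLz0 : setL z0 = set0.
Proof. by apply/setP => i; rewrite !inE /bt nth_nseq if_same. Qed.
Lemma setLz1 : setL z1 = setT.
Proof. by apply/setP => i; rewrite !inE /bt nth_nseq ltn_ord. Qed.

Lemma forall_map (P : {set 'I_6} -> bool) s :
  [forall A in [set:: map setL s], P A] = all (fun a => P (setL a)) s.
Proof.
apply/forall_inP/allP => H a.
- by move=> aS; apply: H; rewrite inE map_f.
- by rewrite inE => /mapP[x xs ->]; exact: H.
Qed.

Lemma exists_map (P : {set 'I_6} -> bool) s :
  [exists A in [set:: map setL s], P A] = has (fun a => P (setL a)) s.
Proof.
apply/exists_inP/hasP => [[A]|[a aS Pa]].
- by rewrite inE => /mapP[x xs ->] PA; exists x.
- by exists (setL a) => //; rewrite inE map_f.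
Qed.

Lemma setT_cons s : [set: 'I_6] |: [set:: map setL s] = [set:: map setL (z1 :: s)].
Proof. by rewrite /= set_cons setLz1. Qed.
Lemma set0_cons s : set0 |: [set:: map setL s] = [set:: map setL (z0 :: s)].
Proof. by rewrite /= set_cons setLz0. Qed.

Lemma H6eq : H6 = [set:: map setL Es].
Proof.
apply/setP => X; rewrite !inE /= -orbA.
congr [|| X == _, X == _ | X == _]; apply/setP => i; rewrite !inE;
  case: i => -[|[|[|[|[|[|//]]]]]] hi; by rewrite -!val_eqE /= !inordK.
Qed.
Lemma ccL s : ccface H6 [set:: map setL s] = ccm Es s.
Proof.
rewrite /ccface /ccm H6eq forall_map.
congr [&& _, _ & _].
- by apply: eq_all => a; rewrite neL nfL.
- rewrite forall_map; apply: eq_all => a; rewrite forall_map.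
  by apply: eq_all => b; rewrite !subL.
- rewrite exists_map; apply: eq_has => e.
  rewrite setT_cons exists_map; apply: eq_has => A.
  rewrite set0_cons exists_map; apply: eq_has => B.
  rewrite properL subdL forall_map; congr [&& _, _ & _].
  by apply: eq_all => C; rewrite !properL.
Qed.

Lemma card_ord_count n (p : nat -> bool) : #|[set i : 'I_n | p i]| = count p (iota 0 n).
Proof.
rewrite cardsE -sum1_card (eq_bigl (fun i : 'I_n => p i)) //.
by rewrite -(big_mkord p (fun _ => 1)) -sum1_count /index_iota subn0.
Qed.

Lemma card_setL x : #|setL x| = count (bt x) (iota 0 6).
Proof. exact: card_ord_count. Qed.

Lemma uniformH6 : uniform 3 H6.
Proof.
rewrite /uniform H6eq; apply/forall_inP => e; rewrite inE => /mapP[x xE ->].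
by rewrite card_setL; move: xE; rewrite /Es !inE => /or3P[] /eqP->.
Qed.
Section Chains.
Variable T : finType.
Definition pr : rel {set T} := fun A B => A \proper B.
Definition sb : rel {set T} := fun A B => A \subset B.
Definition chainb (F : {set {set T}}) :=
  [forall A in F, forall B in F, (A \subset B) || (B \subset A)].

Lemma pr_trans : transitive pr.
Proof. move=> y x z; exact: proper_trans. Qed.
Lemma pr_irr : irreflexive pr.
Proof. move=> x; exact: properxx. Qed.

Lemma pairwise_pr s : pairwise sb s -> uniq s -> pairwise pr s.
Proof.
elim: s => //= x s IH /andP[hx hs] /andP[nx us].
rewrite IH // andbT; apply/allP => y ys.
rewrite /pr properEneq (allP hx y ys : x \subset y) andbT.
by apply: contraNneq nx => ->.
Qed.

Lemma chain_seq F : chainb F ->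
  exists s, [/\ sorted pr s, [set:: s] = F & size s = #|F|].
Proof.
move=> hc.
have tot : {in F &, total sb}.
  move=> A B hA hB; move/forall_inP: hc => /(_ A hA) /forall_inP; exact.
have ss : sorted sb (sort sb (enum F)).
  by apply: (sort_sorted_in tot); apply/allP => x; rewrite mem_enum.
have us : uniq (sort sb (enum F)) by rewrite sort_uniq enum_uniq.
exists (sort sb (enum F)); split.
- apply: pairwise_sorted; apply: pairwise_pr => //.
  by rewrite -sorted_pairwise //; move=> y x z; exact: subset_trans.
- by apply/setP => x; rewrite inE mem_sort mem_enum.
- by rewrite size_sort cardE.
Qed.

Lemma card_seq_set s : sorted pr s -> #|[set:: s]| = size s.
Proof.
move=> hs; rewrite cardsE; apply/card_uniqP.
exact: (@sorted_uniq _ pr pr_trans pr_irr s hs).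
Qed.

Lemma count_faces (P : {set {set T}} -> bool) k (U : finType) (g : U -> seq {set T}) :
  (forall F, P F -> chainb F) -> injective g -> (forall u, size (g u) = k) ->
  (forall s, size s = k -> exists u, g u = s) ->
  #|[set F | P F & #|F| == k]| = #|[set u | sorted pr (g u) && P [set:: g u]]|.
Proof.
move=> hc ginj gs gsur.
rewrite -(@card_in_imset _ _ (fun u => [set:: g u]) [set u | sorted pr (g u) && P [set:: g u]]).
- apply: eq_card => F; rewrite inE; apply/andP/imsetP.
  + move=> [PF /eqP cF]; have [s [srt sF sz]] := chain_seq (hc F PF).
    have [u gu] := gsur s (etrans sz cF).
    by exists u; rewrite ?inE gu ?srt ?sF.
  + move=> [u]; rewrite inE => /andP[srt Pu] ->; split => //.
    by rewrite card_seq_set // gs.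
- move=> u v; rewrite !inE => /andP[su _] /andP[sv _] E; apply: ginj.
  apply: (@irr_sorted_eq _ pr pr_trans pr_irr) => // x.
  by have /setP/(_ x) := E; rewrite !inE.
Qed.

Lemma alt_interval (G F : {set T}) : G \subset F ->
  (\sum_(K : {set T} | (G \subset K) && (K \subset F)) ((-1) ^+ #|K| : int))%R =
  (if G == F then (-1) ^+ #|F| else 0)%R.
Proof.
move=> GF; case: eqP => [-> | neq].
- rewrite (eq_bigl (fun K : {set T} => K == F)) ?big_pred1_eq //.
  by move=> K; rewrite eq_sym eqEsubset.
- have : F :\: G != set0.
    by rewrite setD_eq0; apply/negP => FG; apply: neq; apply/eqP; rewrite eqEsubset GF FG.
  case/set0Pn => x; rewrite inE => /andP[xG xF].
  pose t (K : {set T}) := if x \in K then K :\ x else x |: K.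
  have tt K : t (t K) = K.
    rewrite /t; case: (boolP (x \in K)) => xK.
    + by rewrite setD11 setD1K.
    + by rewrite setU11 setU1K.
  have tinj : injective t by apply: (can_inj tt).
  set S := (\sum_(K | _) _)%R.
  have : S = (- S)%R.
    rewrite {1}/S (reindex_inj tinj) -sumrN; apply: eq_big => K.
    + rewrite /t; case: (boolP (x \in K)) => xK.
      * rewrite subsetD1 xG andbT; congr andb.
        apply/idP/idP => H.
        -- rewrite -(setD1K xK) subUset sub1set xF; exact: H.
        -- exact: subset_trans (subD1set _ _) H.
      * rewrite subUset sub1set xF /=; congr andb.
        apply/idP/idP => H.
        -- apply/subsetP => y yG; move: (subsetP H y yG); rewrite !inE => /orP[/eqP eyx|//].
           by rewrite -eyx yG in xG.
        -- exact: subset_trans H (subsetUr _ _).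
    + move=> _; rewrite /t; case: (boolP (x \in K)) => xK.
      * by rewrite [in RHS](cardsD1 x K) xK exprS mulN1r opprK.
      * by rewrite cardsU1 xK exprS mulN1r.
  lia.
Qed.
End Chains.
Lemma codes6 x : x \in codes -> size x = 6.
Proof. by move=> xc; have /andP[_ /allP/(_ x xc)/eqP] := c5. Qed.

Lemma setL_inj x y : size x = 6 -> size y = 6 -> setL x = setL y -> x = y.
Proof.
move=> sx sy E; apply: (eq_from_nth (x0 := false)); first by rewrite sx sy.
move=> i; rewrite sx => hi.
by have /setP/(_ (Ordinal hi)) := E; rewrite !inE.
Qed.

Definition hc (i : 'I_64) : {set 'I_6} := setL (nth [::] codes i).

Lemma hc_bij : bijective hc.
Proof.
apply: inj_card_bij.
- move=> i j /setL_inj E; apply/val_inj => /=.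
  have [u _] := andP c5.
  apply/eqP; rewrite -(nth_uniq [::] _ _ u) ?(ltn_ord i) ?(ltn_ord j) //.
  by apply/eqP/E; apply: codes6; apply: mem_nth.
- by rewrite card_ord -cardsT -powersetT card_powerset cardsT card_ord.
Qed.

Lemma setL_surj (X : {set 'I_6}) : exists2 x, x \in codes & X = setL x.
Proof.
have [h' K1 K2] := hc_bij.
exists (nth [::] codes (h' X)); first by apply: mem_nth.
by rewrite -/(hc (h' X)) K2.
Qed.

Lemma sum_sets (F : {set 'I_6} -> nat) : \sum_(X : {set 'I_6}) F X = lsum (fun x => F (setL x)).
Proof.
rewrite (reindex hc); last by apply: onW_bij; exact: hc_bij.
rewrite /lsum sumnE big_map -(big_mkord xpredT (fun i => F (setL (nth [::] codes i)))).
rewrite -{2}(mkseq_nth [::] codes) /mkseq big_map /index_iota subn0.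
have -> : size codes = 64 by [].
by [].
Qed.

Lemma eq_lsum F1 F2 : F1 =1 F2 -> lsum F1 = lsum F2.
Proof. by move=> E; rewrite /lsum (eq_map E). Qed.

Lemma card_sum (U : finType) (Q : pred U) : #|[set u | Q u]| = \sum_u (Q u : nat).
Proof.
rewrite cardsE -sum1_card big_mkcond /=; apply: eq_bigr => u _.
by rewrite unfold_in; case: (Q u).
Qed.

Lemma sum_pair (A B : finType) (f : A * B -> nat) :
  \sum_(p : A * B) f p = \sum_(a : A) \sum_(b : B) f (a, b).
Proof. by rewrite pair_bigA; apply: eq_bigr => -[]. Qed.

Lemma face_chain F : ccface H6 F -> chainb F.
Proof. by case/and3P. Qed.

Lemma fnum1 : fnum (coloring_complex H6) 1 = 36.
Proof.
rewrite /fnum /coloring_complex.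
rewrite (@count_faces _ _ 1 _ (fun x : {set 'I_6} => [:: x])) //; first last.
- by case => [|x [|]] //= _; exists x.
- by move=> x y [].
- exact: face_chain.
rewrite card_sum sum_sets -c1; apply: eq_lsum => x /=.
by rewrite -[[:: setL x]]/(map setL [:: x]) ccL.
Qed.

Lemma fnum2 : fnum (coloring_complex H6) 2 = 108.
Proof.
rewrite /fnum /coloring_complex.
rewrite (@count_faces _ _ 2 _ (fun p : {set 'I_6} * {set 'I_6} => [:: p.1; p.2])) //; first last.
- by case => [|x [|y [|]]] //= _; exists (x, y).
- by move=> [x y] [x' y'] [-> ->].
- exact: face_chain.
rewrite card_sum sum_pair sum_sets -c2; apply: eq_lsum => x /=.
rewrite sum_sets; apply: eq_lsum => y /=.
rewrite -[[:: setL x; setL y]]/(map setL [:: x; y]) ccL /pr properL.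
by case: properm.
Qed.

Lemma fnum3 : fnum (coloring_complex H6) 3 = 72.
Proof.
rewrite /fnum /coloring_complex.
rewrite (@count_faces _ _ 3 _ (fun p : {set 'I_6} * {set 'I_6} * {set 'I_6} => [:: p.1.1; p.1.2; p.2])) //; first last.
- by case => [|x [|y [|z [|]]]] //= _; exists (x, y, z).
- by move=> [[x y] z] [[x' y'] z'] [-> -> ->].
- exact: face_chain.
rewrite card_sum sum_pair sum_pair sum_sets -c3; apply: eq_lsum => x /=.
rewrite sum_sets; apply: eq_lsum => y /=.
rewrite sum_sets; apply: eq_lsum => z /=.
rewrite -[[:: setL x; setL y; setL z]]/(map setL [:: x; y; z]) ccL /pr !properL.
by case: properm; case: properm.
Qed.

Lemma fnum0 : fnum (coloring_complex H6) 0 = 1.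
Proof.
rewrite /fnum /coloring_complex.
have -> : [set F | ccface H6 F & #|F| == 0] = [set set0].
  apply/setP => F; rewrite !inE cards_eq0; case: eqP => [->|] //=; rewrite ?andbF //.
  have -> : (set0 : {set {set 'I_6}}) = [set:: map setL [::]] by apply/setP => x; rewrite !inE.
  by rewrite ccL andbT.
by rewrite cards1.
Qed.
Lemma edge_card e : e \in H6 -> #|e| = 3.
Proof.
rewrite H6eq inE => /mapP[x xE ->].
by rewrite card_setL; move: xE; rewrite /Es !inE => /or3P[] /eqP->.
Qed.

Lemma face_le3 F : ccface H6 F -> #|F| <= 3.
Proof.
case/and3P => /forall_inP hne /forall_inP hch.
case/exists_inP => e eE /exists_inP [A hA /exists_inP [B hB /and3P [BA eAB /forall_inP hC]]].
have ce := edge_card eE.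
have BsA : B \subset A := proper_sub BA.
have hAB : #|B| + 3 <= #|A|.
  have h1 : #|e| <= #|A :\: B| by apply: subset_leq_card.
  move: h1; rewrite cardsD (setIidPr BsA) ce => h1.
  have := subset_leq_card BsA; lia.
have key C : C \in F -> (0 < #|C| < 6) && ((#|C| <= #|B|) || (#|B| + 3 <= #|C|)).
  move=> CF; have /andP[ne nt] := hne C CF.
  apply/andP; split.
    rewrite card_gt0 ne /=.
    have : C \proper setT by rewrite properT.
    by move/proper_card; rewrite cardsT card_ord.
  have BC : (B \subset C) || (C \subset B).
    move: hB; rewrite !inE => /orP[/eqP->|BF]; first by rewrite sub0set.
    by move/forall_inP: (hch B BF) => /(_ C CF).
  case: (boolP (C \subset B)) => CB; first by rewrite subset_leq_card.
  rewrite (negbTE CB) orbF in BC.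
  have BpC : B \proper C by rewrite properE BC CB.
  have nCA : ~~ (C \proper A) by have := hC C CF; rewrite BpC.
  have AC : #|A| <= #|C|.
    move: hA; rewrite !inE => /orP[/eqP AT|AF].
      by move: nCA; rewrite AT properT nt.
    move/forall_inP: (hch C CF) => /(_ A AF) /orP[CA|AC]; last exact: subset_leq_card.
    by move: nCA; rewrite properE CA /= negbK => /subset_leq_card.
  by apply/orP; right; exact: leq_trans hAB AC.
have cinj : {in F &, injective (fun C : {set 'I_6} => (inord #|C| : 'I_7))}.
  move=> C D CF DF /(congr1 val) /=.
  have /andP[/andP[_ c6] _] := key C CF; have /andP[/andP[_ d6] _] := key D DF.
  have c7 : #|C| < 7 := ltnW c6. have d7 : #|D| < 7 := ltnW d6.
  rewrite !inordK // => cd; move/forall_inP: (hch C CF) => /(_ D DF) /orP[CD|DC].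
    by have /eqP : C == D by rewrite eqEcard CD cd leqnn.
  by have /eqP : D == C by rewrite eqEcard DC cd leqnn.
rewrite -(card_in_imset cinj).
set b := #|B|.
have b3 : b <= 3.
  have : #|A| <= 6 by have := max_card A; rewrite card_ord.
  rewrite /b; lia.
apply: (@leq_trans #|[set i : 'I_7 | (0 < i < 6) && ((i <= b) || (b + 3 <= i))]|).
  apply: subset_leq_card; apply/subsetP => i /imsetP [C CF ->].
  have /andP[/andP[c0 c6] hcb] := key C CF.
  rewrite inE inordK; last exact: ltnW c6.
  by rewrite c0 c6 hcb.
rewrite (card_ord_count 7 (fun i => (0 < i < 6) && ((i <= b) || (b + 3 <= i)))).
by move: b3; case: b => [|[|[|[|]]]].
Qed.

Lemma cdim : cdim1 (coloring_complex H6) = 3.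
Proof.
have h1 : cdim1 (coloring_complex H6) <= 3.
  by apply/bigmax_leqP => F; exact: face_le3.
have h2 : 3 <= cdim1 (coloring_complex H6).
  have : 0 < fnum (coloring_complex H6) 3 by rewrite fnum3.
  rewrite card_gt0 => /set0Pn [F]; rewrite inE => /andP[hF /eqP F3].
  apply: leq_trans (@leq_bigmax_cond _ (coloring_complex H6) (fun F => #|F|) F hF).
  by rewrite F3.
by apply/eqP; rewrite eqn_leq h1 h2.
Qed.

Lemma sum4 (R : comNzRingType) (c : nat -> R) (q : R) :
  (\sum_(i < 4) c i * q ^+ (3 - i) = c 0%N * q ^+ 3 + c 1%N * q ^+ 2 + c 2%N * q ^+ 1 + c 3%N * q ^+ 0)%R.
Proof. by rewrite !big_ord_recr big_ord0 /= add0r. Qed.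

Lemma hvec : hvector (coloring_complex H6) = [:: 1%Z; 33%Z; 39%Z; (-1)%Z].
Proof.
rewrite /hvector /hpoly cdim.
rewrite (sum4 (fun i => (((fnum (coloring_complex H6) i)%:Z)%:P)%R) ('X - 1)).
rewrite fnum0 fnum1 fnum2 fnum3.
set p := (_ + _)%R.
rewrite /=.
have -> : p = ('X^3 + 'X^2 *+ 33 + 'X *+ 39 - 1)%R.
  rewrite /p -!natz !polyC_natr.
  ring.
rewrite !(coefD, coefB, coefN, coefMn, coefXn, coefX, coef1).
vm_compute. reflexivity.
Qed.

Definition facetb (F : {set {set 'I_6}}) :=
  ccface H6 F && [forall K, (ccface H6 K && (F \subset K)) ==> (K == F)].

Lemma facetP F : facet (coloring_complex H6) F <-> facetb F.
Proof.
split.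
- move=> [hF H]; apply/andP; split => //; apply/forallP => K.
  by apply/implyP => /andP[hK FK]; apply/eqP; exact: H K hK FK.
- move=> /andP[hF /forallP H]; split => // K hK FK; apply/eqP.
  by apply: (implyP (H K)); apply/andP.
Qed.

Lemma facet_odd F : facetb F -> odd #|F|.
Proof.
case/andP => hF /forallP hmax.
have le3 := face_le3 hF.
have notbig K : ccface H6 K -> F \subset K -> K = F.
  by move=> hK FK; apply/eqP; apply: (implyP (hmax K)); rewrite hK FK.
have n0 : #|F| != 0.
  apply/negP => /eqP /cards0_eq F0.
  pose x7 := [:: true; true; true; false; false; false].
  have hK : ccface H6 [set:: map setL [:: x7]] by rewrite ccL.
  have := notbig _ hK; rewrite F0 sub0set => /(_ isT) /setP /(_ (setL x7)).
  by rewrite !inE eqxx.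
have n2 : #|F| != 2.
  apply/negP => /eqP F2.
  have [s [srt sF sz]] := chain_seq (face_chain hF).
  rewrite F2 in sz; move: srt sF; case: s sz => [|X [|Y [|]]] //= _ XY sF.
  have [x xc EX] := setL_surj X; have [y yc EY] := setL_surj Y; subst X Y.
  have pxy : properm x y by rewrite -properL; move: XY; rewrite /pr andbT.
  have cxy : ccm Es [:: x; y] by rewrite -ccL /= sF.
  have := allP (allP c4 x xc) y yc; rewrite pxy cxy => /hasP [c cc].
  case: eqP => // cx; case: eqP => // cy hc.
  have hK : ccface H6 [set:: map setL [:: x; y; c]] by rewrite ccL.
  have FK : F \subset [set:: map setL [:: x; y; c]].
    rewrite -sF; apply/subsetP => z; rewrite !inE /= => /orP[] ->; by rewrite ?orbT.
  have := notbig _ hK FK; rewrite -sF => /setP /(_ (setL c)); rewrite !inE /= eqxx orbT /=.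
  rewrite orbT => /esym; case/orP => /eqP /setL_inj E.
  + by apply: cx; apply: E; apply: codes6.
  + by apply: cy; apply: E; apply: codes6.
move: le3 n0 n2; case: #|F| => [|[|[|[|]]]] //.
Qed.

Lemma fnumE (i : 'I_4) : fnum (coloring_complex H6) i = nth 0 [:: 1; 36; 108; 72] i.
Proof.
case: i => -[|[|[|[|//]]]] h; [exact: fnum0 | exact: fnum1 | exact: fnum2 | exact: fnum3].
Qed.

Lemma notpart : ~ partitionable (coloring_complex H6).
Proof.
move=> [G [h1 [h2 h3]]].
pose w (K : {set {set 'I_6}}) : int := ((-1) ^+ #|K|)%R.
have S1 : (\sum_(K | ccface H6 K) w K)%R = 1%R.
  rewrite (partition_big (fun K : {set {set 'I_6}} => (inord #|K| : 'I_4)) xpredT) //=.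
  rewrite (eq_bigr (fun j : 'I_4 => ((-1) ^+ j *+ fnum (coloring_complex H6) j)%R)).
    rewrite !big_ord_recr big_ord0 !fnumE.
    by vm_compute.
  move=> j _.
  rewrite (eq_bigl (fun K => K \in [set K | ccface H6 K & #|K| == j])); last first.
    move=> K; rewrite inE; case hK: (ccface H6 K) => //=.
    have le := face_le3 hK.
    by rewrite -val_eqE /= inordK.
  rewrite (eq_bigr (fun _ => ((-1) ^+ j)%R)) ?sumr_const //.
  by move=> K; rewrite inE /w => /andP[_ /eqP ->].
have S2 : (\sum_(K | ccface H6 K) w K)%R =
          (\sum_(F | facetb F) (if G F == F then w F else 0))%R.
  rewrite (eq_bigr (fun K : {set {set 'I_6}} => \sum_(F | facetb F && (G F \subset K) && (K \subset F)) w K)%R); last first.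
    move=> K hK; have [F0 [[f0 [g0 k0]] u0]] := h3 K hK.
    rewrite (big_pred1 F0) // => F /=; apply/idP/eqP.
    - move=> /andP[/andP[fF gF] kF]; apply: u0; split; first exact/facetP.
      by split.
    - by move=> ->; rewrite g0 k0 !andbT; apply/facetP.
  rewrite (exchange_big_dep facetb) /=; last by move=> K F _ /andP[/andP[]].
  apply: eq_bigr => F fF.
  have fF' := proj2 (facetP F) fF.
  rewrite (eq_bigl (fun K : {set {set 'I_6}} => (G F \subset K) && (K \subset F))); last first.
    move=> K; rewrite fF /=; case gK: (G F \subset K); case kF: (K \subset F); rewrite ?andbF //=.
    by have := h2 F K fF' gK kF; rewrite /coloring_complex => ->.
  by rewrite alt_interval //; exact: h1.
have S3 : (\sum_(F | facetb F) (if G F == F then w F else 0) <= 0 :> int)%R.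
  apply: sumr_le0 => F fF.
  case: eqP => _ //.
  by rewrite /w -signr_odd facet_odd.
by move: S3; rewrite -S2 S1.
Qed.

Theorem mainTheorem10 :
  uniform 3 H6 /\
  hvector (coloring_complex H6) = [:: 1%Z; 33%Z; 39%Z; (-1)%Z] /\
  ~ partitionable (coloring_complex H6) /\
  (exists (n k : nat) (E : {set {set 'I_n}}),
      uniform k E /\
      (exists2 x, x \in hvector (coloring_complex E) & (x < 0)%R) /\
      ~ partitionable (coloring_complex E)).
Proof.
split; first exact: uniformH6.
split; first exact: hvec.
split; first exact: notpart.
exists 6, 3, H6; split; first exact: uniformH6.
split; last exact: notpart.
by exists (-1)%Z => //; rewrite hvec.
Qed.
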